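(* Let $R_1$ and $R_2$ be finite commutative local principal ideal rings with unity, and let $R=R_1\times R_2$. Suppose $\operatorname{diam}(\Gamma(R_1))=0$ and $\operatorname{diam}(\Gamma(R_2))=2$. Then $\overline{\Gamma(R)}$ is a divisor graph if and only if $R_1$ is an integral domain.
   Context: For a commutative ring $S$ with unity, $Z(S)$ denotes its set of zero divisors. The zero divisor graph $\Gamma(S)$ is the simple graph with vertex set $Z(S)\setminus\{0\}$, distinct $a,b$ adjacent iff $ab=0$; its complement $\overline{\Gamma(S)}$ has the same vertex set with distinct $a,b$ adjacent iff $ab\neq 0$. The diameter of a graph is the maximum distance (number of edges in a shortest path) between pairs of vertices. In the paper's usage, $\operatorname{diam}(\Gamma(S))=0$ means $\Gamma(S)$ has at most one vertex, i.e. $S$ has at most one nonzero zero divisor (this includes the case that $S$ is an integral domain). A ring is local if it has a unique maximal ideal. For a nonempty set $T$ of positive integers, the divisor graph $G(T)$ has vertex set $T$, with distinct $i,j$ adjacent iff $i\mid j$ or $j\mid i$; a graph is a divisor graph if it is isomorphic to some $G(T)$. *)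

(* Defs.v *)
From HB Require Import structures.
From mathcomp Require Import all_boot all_order all_algebra.
Set Implicit Arguments. Unset Strict Implicit. Unset Printing Implicit Defensive.
Import GRing.Theory.
Local Open Scope ring_scope.

Section RingDefs.
Variable R : finComPzRingType.

Definition is_ideal (I : {set R}) : bool :=
  [&& (0 \in I),
      [forall x, forall y, (x \in I) ==> (y \in I) ==> (x - y \in I)] &
      [forall r, forall x, (x \in I) ==> (r * x \in I)]].

Definition principal_ideal (a : R) : {set R} := [set r * a | r : R].

Definition is_PIR : Prop :=
  forall I : {set R}, is_ideal I -> exists a : R, I = principal_ideal a.

Definition is_maximal_ideal (M : {set R}) : Prop :=
  is_ideal M /\ M != [set: R] /\
  forall J : {set R}, is_ideal J -> M \subset J -> J = M \/ J = [set: R].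

Definition is_local : Prop :=
  exists M : {set R}, is_maximal_ideal M /\
    forall M' : {set R}, is_maximal_ideal M' -> M' = M.

Definition is_integral_domain : Prop :=
  (1 != 0 :> R) /\ forall a b : R, a * b = 0 -> a = 0 \/ b = 0.

Definition zero_divisors : {set R} := [set a | [exists b, (b != 0) && (a * b == 0)]].

Definition zdg_vertices : {set R} := zero_divisors :\ 0.

Definition zdg_adj : rel R := fun a b => (a != b) && (a * b == 0).
Definition zdg_compl_adj : rel R := fun a b => (a != b) && (a * b != 0).
End RingDefs.

Section GraphDefs.
Variable T : finType.
Variables (V : {set T}) (e : rel T).

Definition dist_le (k : nat) (x y : T) : Prop :=
  exists p : seq T, [/\ path e x p, all (mem V) (x :: p),
                        last x p = y & (size p <= k)%N].

(* For d = 0 this says the graph has at most one vertex (paper's convention). *)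
Definition diam_eq (d : nat) : Prop :=
  (forall x y, x \in V -> y \in V -> dist_le d x y) /\
  ((0 < d)%N -> exists x y, [/\ x \in V, y \in V & ~ dist_le d.-1 x y]).

(* (V, e) is isomorphic to the divisor graph G(S) of a nonempty set S of
   positive integers (S is the image of f) *)
Definition is_divisor_graph : Prop :=
  V != set0 /\
  exists f : T -> nat,
    {in V &, injective f} /\ (forall x, x \in V -> (0 < f x)%N) /\
    (forall x y, x \in V -> y \in V -> x != y ->
       e x y = ((f x %| f y) || (f y %| f x))%N).
End GraphDefs.

HB.instance Definition _ (R1 R2 : finComNzRingType) :=
  GRing.ComNzRing.on (R1 * R2)%type.

(* Main.v *)
Require Import Defs.
From mathcomp Require Import all_boot all_order all_algebra.

Fixpoint pr (n : nat) : nat := if n is k.+1 then pdiv ((pr k)`!.+1) else 2.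

Lemma pdiv_fact_gt m : (m < pdiv (m`!.+1))%N.
Proof.
have h1 : (1 < m`!.+1)%N by rewrite ltnS fact_gt0.
have hp := pdiv_prime h1.
rewrite ltnNge; apply/negP => hle.
have hd : pdiv (m`!.+1) %| m`! by apply: dvdn_fact; rewrite prime_gt0.
have hd2 : (pdiv (m`!.+1) %| m`! + 1)%N by rewrite addn1; exact: pdiv_dvd.
move: hd2; rewrite (dvdn_addr _ hd) dvdn1 => /eqP e.
by rewrite e in hp.
Qed.

Lemma pr_prime n : prime (pr n).
Proof. case: n => [|n]; first by []. rewrite [pr _]/=. apply: pdiv_prime. by rewrite ltnS fact_gt0. Qed.

Lemma pr_step i : (pr i < pr i.+1)%N.
Proof. have := pdiv_fact_gt (pr i). by []. Qed.
Lemma pr_inj : injective pr.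
Proof.
have hm : forall i j, (i < j)%N -> (pr i < pr j)%N.
  move=> i j; elim: j => [|j IH] //.
  rewrite ltnS leq_eqVlt => /orP [/eqP ->|/IH h]; first exact: pr_step.
  exact: ltn_trans h (pr_step j).
move=> i j e; case: (ltngtP i j) => h //.
- by have := hm _ _ h; rewrite e ltnn.
- by have := hm _ _ h; rewrite e ltnn.
Qed.
Section DG.
Variable T : finType.
Variables (V : {set T}) (e : rel T) (lt : rel T).
Hypothesis lt_irr : irreflexive lt.
Hypothesis lt_tr : transitive lt.
Hypothesis hadj : forall x y, x \in V -> y \in V -> x != y -> e x y = lt x y || lt y x.
Hypothesis hV : V != set0.

Let p (y : T) := pr (enum_rank y).
Let le x y := lt x y || (x == y).
Let f x := (\prod_(y | le y x) p y)%N.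

Lemma p_prime y : prime (p y). Proof. exact: pr_prime. Qed.

Lemma dvd_f x y : (f x %| f y)%N = le x y.
Proof.
apply/idP/idP.
- move=> h.
  have : (p x %| f y)%N.
    apply: dvdn_trans h. rewrite /f (bigD1 x) /=; last by rewrite /le eqxx orbT.
    exact: dvdn_mulr (dvdnn _).
  rewrite /f Euclid_dvd_prod; last exact: p_prime.
  rewrite big_has_cond => /hasP [z _ /andP [hz]].
  rewrite dvdn_prime2 ?p_prime // => /eqP /pr_inj /val_inj /enum_rank_inj exz.
  by rewrite exz.
- move=> hxy. rewrite /f [X in (_ %| X)%N](bigID (fun z => le z x)) /=.
  have -> : (\prod_(z | le z y && le z x) p z = \prod_(z | le z x) p z)%N.
    apply: eq_bigl => z /=.
    case hz: (le z x); rewrite ?andbF ?andbT //.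
    move: hz hxy; rewrite /le => /orP [hz|/eqP ->] //.
    move=> /orP [h|/eqP <-]; last by rewrite hz.
    by rewrite (lt_tr _ _ _ hz h).
  exact: dvdn_mulr (dvdnn _).
Qed.

Lemma divisor_graph_of_order : is_divisor_graph V e.
Proof.
split => //. exists f. split; [|split].
- move=> x y _ _ fxy. apply/eqP; apply/negPn/negP => nxy.
  have h1 : le x y by rewrite -dvd_f fxy.
  have h2 : le y x by rewrite -dvd_f fxy.
  move: h1 h2; rewrite /le (negPf nxy) eq_sym (negPf nxy) !orbF => h1 h2.
  by have := lt_tr _ _ _ h1 h2; rewrite lt_irr.
- move=> x _; apply: prodn_cond_gt0 => i _; exact: prime_gt0 (p_prime i).
- move=> x y hx hy nxy. rewrite hadj // !dvd_f /le (negPf nxy) eq_sym (negPf nxy) !orbF //.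
Qed.
End DG.
From mathcomp Require Import ring.
Import GRing.Theory.
Import GRing.Theory.
Local Open Scope ring_scope.


Section Loc.
Variable R : finComNzRingType.

Definition dvdr (a b : R) : bool := [exists r, b == r * a].
Definition unitb (a : R) : bool := [exists v, a * v == 1].

Lemma idealP (I : {set R}) : is_ideal I ->
  [/\ 0 \in I, forall x y, x \in I -> y \in I -> x - y \in I &
      forall r x, x \in I -> r * x \in I].
Proof.
case/and3P => h0 /forallP h1 /forallP h2; split => //.
- by move=> x y hx hy; move/forallP: (h1 x) => /(_ y); rewrite hx hy.
- by move=> r x hx; move/forallP: (h2 r) => /(_ x); rewrite hx.
Qed.

Lemma ideal_add (I : {set R}) x y : is_ideal I -> x \in I -> y \in I -> x + y \in I.
Proof.
case/idealP => h0 hB _ hx hy.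
have hn : - y \in I by rewrite -sub0r; apply: hB.
by rewrite -[y]opprK; apply: hB.
Qed.

Lemma exists_max (I : {set R}) : is_ideal I -> I != setT ->
  exists M, is_maximal_ideal M /\ I \subset M.
Proof.
move=> hI hT.
pose P := fun J : {set R} => [&& is_ideal J, I \subset J & J != setT].
have PI : P I by rewrite /P hI subxx hT.
case: (arg_maxnP (fun J : {set R} => #|J|) PI) => M /and3P [hM hIM hMT] hmax.
exists M; split => //; split => //; split => //.
move=> J hJ hMJ. case: (boolP (J == setT)) => [/eqP ->|hJT]; first by right.
left. apply/eqP; rewrite eq_sym eqEcard hMJ /=.
apply: hmax. by rewrite /P hJ hJT (subset_trans hIM hMJ).
Qed.

Hypothesis hloc : is_local R.
Hypothesis hpir : is_PIR R.

Lemma principal_ideal_is (a : R) : is_ideal (principal_ideal a).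
Proof.
apply/and3P; split.
- apply/imsetP; exists 0 => //; by rewrite mul0r.
- apply/forallP => x; apply/forallP => y; apply/implyP => /imsetP [r _ ->].
  apply/implyP => /imsetP [s _ ->]. apply/imsetP; exists (r - s) => //; ring.
- apply/forallP => r; apply/forallP => x; apply/implyP => /imsetP [s _ ->].
  apply/imsetP; exists (r * s) => //; ring.
Qed.

Lemma mem_principal (a x : R) : (x \in principal_ideal a) = dvdr a x.
Proof.
apply/imsetP/existsP => [[r _ ->]|[r /eqP ->]]; by exists r.
Qed.

Lemma nonunit_in_max : exists M, is_maximal_ideal M /\
   (forall x, (x \in M) = ~~ unitb x).
Proof.
case: hloc => M [hM huniq]. exists M; split => // x.
case: (hM) => hMi [hMT _].
apply/idP/idP.
- move=> hx; apply/negP => /existsP [v /eqP hv].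
  have h1 : 1 \in M by rewrite -hv mulrC; case/idealP: hMi => _ _ ->.
  move/negP: hMT; apply; apply/eqP/setP => r; rewrite in_setT.
  by rewrite -[r]mulr1; case/idealP: hMi => _ _ ->.
- move=> hx.
  have hI := principal_ideal_is x.
  have hIT : principal_ideal x != setT.
    apply/negP => /eqP e. have : (1 : R) \in principal_ideal x by rewrite e in_setT.
    rewrite mem_principal => /existsP [r /eqP h1].
    by move/negP: hx; apply; apply/existsP; exists r; rewrite mulrC -h1.
  case: (exists_max _ hI hIT) => M' [hM' hsub].
  rewrite -(huniq _ hM'). apply: (subsetP hsub). by rewrite mem_principal; apply/existsP; exists 1; rewrite mul1r.
Qed.

Lemma chain (x y : R) : dvdr x y || dvdr y x.
Proof.
case: nonunit_in_max => M [[hMi [hMT _]] hMu].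
pose I := [set u | [exists r, exists s, u == r * x + s * y]].
have hI : is_ideal I.
  apply/and3P; split.
  - by rewrite inE; apply/existsP; exists 0; apply/existsP; exists 0; rewrite !mul0r addr0.
  - apply/forallP => u; apply/forallP => w; apply/implyP; rewrite inE => /existsP [r /existsP [s /eqP ->]].
    apply/implyP; rewrite inE => /existsP [r' /existsP [s' /eqP ->]].
    rewrite inE; apply/existsP; exists (r - r'); apply/existsP; exists (s - s'); apply/eqP; ring.
  - apply/forallP => c; apply/forallP => u; apply/implyP; rewrite inE => /existsP [r /existsP [s /eqP ->]].
    rewrite inE; apply/existsP; exists (c * r); apply/existsP; exists (c * s); apply/eqP; ring.
case: (hpir _ hI) => z hz.
have : z \in I by rewrite hz mem_principal; apply/existsP; exists 1; rewrite mul1r.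
rewrite inE => /existsP [r /existsP [s /eqP ez]].
have : x \in I by rewrite inE; apply/existsP; exists 1; apply/existsP; exists 0; rewrite mul1r mul0r addr0.
rewrite hz mem_principal => /existsP [a /eqP ex].
have : y \in I by rewrite inE; apply/existsP; exists 0; apply/existsP; exists 1; rewrite mul1r mul0r add0r.
rewrite hz mem_principal => /existsP [b /eqP ey].
case: (boolP (unitb a)) => [/existsP [v /eqP hv]|ha].
  apply/orP; left; apply/existsP; exists (b * v); apply/eqP.
  have hz' : z = v * x by rewrite ex mulrA [v * a]mulrC hv mul1r.
  rewrite ey hz'; ring.
case: (boolP (unitb b)) => [/existsP [v /eqP hv]|hb].
  apply/orP; right; apply/existsP; exists (a * v); apply/eqP.
  have hz' : z = v * y by rewrite ey mulrA [v * b]mulrC hv mul1r.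
  rewrite ex hz'; ring.
have haM : a \in M by rewrite hMu.
have hbM : b \in M by rewrite hMu.
have hcM : r * a + s * b \in M.
  by apply: ideal_add => //; case/idealP: hMi => _ _ ->.
have hu : unitb (1 - (r * a + s * b)).
  rewrite -[unitb _]negbK -hMu; apply/negP => h1.
  have : 1 \in M by rewrite -(subrK (r * a + s * b) 1); apply: ideal_add.
  rewrite hMu => /negP; apply; apply/existsP; exists 1; by rewrite mulr1.
case/existsP: hu => v /eqP hv.
have z0 : z = 0.
  have e1 : (1 - (r * a + s * b)) * z = 0.
    rewrite mulrBl mul1r {1}ez ex ey; ring.
  by rewrite -[z]mul1r -hv mulrC mulrA [z * _]mulrC e1 mul0r.
apply/orP; left; apply/existsP; exists 0; by rewrite ey z0 !mulr0 mul0r.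
Qed.
End Loc.
Arguments dvdr {R}.
Arguments unitb {R}.
Arguments chain {R}.

Lemma inV (R : finComNzRingType) (x c : R) : x != 0 -> c != 0 -> x * c = 0 -> x \in zdg_vertices R.
Proof.
move=> hx hc h. rewrite /zdg_vertices in_setD1 hx /= inE; apply/existsP; exists c.
by rewrite hc h eqxx.
Qed.

Lemma seven (p q s t u w x : nat) :
  (p %| s)%N || (s %| p)%N -> ~~ ((q %| s)%N || (s %| q)%N) ->
  (t %| s)%N || (s %| t)%N -> ~~ ((p %| t)%N || (t %| p)%N) ->
  (u %| s)%N || (s %| u)%N -> ~~ ((t %| u)%N || (u %| t)%N) ->
  (u %| w)%N || (w %| u)%N -> ~~ ((s %| w)%N || (w %| s)%N) ->
  (u %| x)%N || (x %| u)%N -> ~~ ((w %| x)%N || (x %| w)%N) ->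
  (u %| p)%N || (p %| u)%N -> ~~ ((x %| p)%N || (p %| x)%N) ->
  (q %| p)%N || (p %| q)%N -> ~~ ((u %| q)%N || (q %| u)%N) -> p = q.
Proof.
move=> PS nQS TS nPT US nTU UW nSW UX nWX UP nXP QP nUQ.
move: nQS nPT nTU nSW nWX nXP nUQ.
rewrite !negb_or => /andP [nqs nsq] /andP [npt ntp] /andP [ntu nut] /andP [nsw nws]
  /andP [nwx nxw] /andP [nxp npx] /andP [nuq nqu].
have F : forall a b c, (a %| b)%N -> (b %| c)%N -> ~~ (a %| c)%N -> False.
  by move=> a b c h1 h2 /negP; apply; apply: dvdn_trans h2.
apply/eqP; rewrite eqn_dvd.
case/orP: QP => h.
-
  have sp : (s %| p)%N by case/orP: PS => // h1; case: (F _ _ _ h h1 nqs).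
  have st : (s %| t)%N by case/orP: TS => // h1; case: (F _ _ _ h1 sp ntp).
  have su : (s %| u)%N by case/orP: US => // h1; case: (F _ _ _ h1 st nut).
  have wu : (w %| u)%N by case/orP: UW => // h1; case: (F _ _ _ su h1 nsw).
  have xu : (x %| u)%N by case/orP: UX => // h1; case: (F _ _ _ wu h1 nwx).
  have pu : (p %| u)%N by case/orP: UP => // h1; case: (F _ _ _ xu h1 nxp).
  have pq : (p %| q)%N.
    case: (boolP (p %| q)%N) => // h1. 
    exfalso; exact: (F _ _ _ h pu nqu).
  by rewrite pq h.
- have ps : (p %| s)%N by case/orP: PS => // h1; case: (F _ _ _ h1 h nsq).
  have ts : (t %| s)%N by case/orP: TS => // h1; case: (F _ _ _ ps h1 npt).
  have us : (u %| s)%N by case/orP: US => // h1; case: (F _ _ _ ts h1 ntu).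
  have uw : (u %| w)%N by case/orP: UW => // h1; case: (F _ _ _ h1 us nws).
  have ux : (u %| x)%N by case/orP: UX => // h1; case: (F _ _ _ h1 uw nxw).
  have up : (u %| p)%N by case/orP: UP => // h1; case: (F _ _ _ h1 ux npx).
  have qp : (q %| p)%N.
    case: (boolP (q %| p)%N) => // h1.
    exfalso; exact: (F _ _ _ up h nuq).
  by rewrite qp h.
Qed.

Lemma pmul (R1 R2 : finComNzRingType) (a c : R1) (b d : R2) :
  ((a, b) * (c, d) : (R1 * R2)%type) = (a * c, b * d).
Proof. by []. Qed.

Section Back.
Variables R1 R2 : finComNzRingType.
Hypothesis hl2 : is_local R2.
Hypothesis hp2 : is_PIR R2.
Hypothesis hdom : is_integral_domain R1.
Local Notation T := (R1 * R2)%type.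

Lemma dvdr_refl (a : R2) : dvdr a a.
Proof. by apply/existsP; exists 1; rewrite mul1r. Qed.

Lemma dvdr_trans {a b c : R2} : dvdr a b -> dvdr b c -> dvdr a c.
Proof.
move=> /existsP [r /eqP ->] /existsP [s /eqP ->]; apply/existsP; exists (s * r).
by rewrite mulrA.
Qed.

Lemma dvdr_mono {a b c : R2} : dvdr b c -> a * c != 0 -> a * b != 0.
Proof.
move=> /existsP [r /eqP ->] h; apply/negP => /eqP h0; move/negP: h; apply.
by rewrite mulrCA h0 mulr0.
Qed.

Definition Kr (x y : T) : bool :=
  dvdr x.2 y.2 && (~~ dvdr y.2 x.2 || (enum_rank x < enum_rank y)%N).

Lemma Kr_irr x : Kr x x = false.
Proof. by rewrite /Kr dvdr_refl ltnn. Qed.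

Lemma Kr_trans {x y z} : Kr x y -> Kr y z -> Kr x z.
Proof.
rewrite /Kr => /andP [dxy hxy] /andP [dyz hyz].
rewrite (dvdr_trans dxy dyz) /=.
case: (boolP (dvdr z.2 x.2)) => //= dzx.
have dyx := dvdr_trans dyz dzx.
have dzy := dvdr_trans dzx dxy.
move: hxy hyz; rewrite dyx dzy /= => h1 h2; exact: ltn_trans h1 h2.
Qed.

Lemma Kr_total x y : x != y -> Kr x y || Kr y x.
Proof.
move=> nxy; rewrite /Kr.
case/orP: (chain hl2 hp2 x.2 y.2) => h; rewrite h /=.
- case: (boolP (dvdr y.2 x.2)) => //= h'.
  case: (ltngtP (enum_rank x) (enum_rank y)) => // /val_inj /enum_rank_inj e.
  by rewrite e eqxx in nxy.
- case: (boolP (dvdr x.2 y.2)) => //= h'; rewrite ?orbT //.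
  case: (ltngtP (enum_rank x) (enum_rank y)) => //; rewrite ?orbT // => /val_inj /enum_rank_inj e.
  by rewrite e eqxx in nxy.
Qed.

Definition ltr (x y : T) : bool :=
  if x.1 == 0 then (y.1 == 0) && Kr y x && (x.2 * y.2 != 0)
  else if y.1 == 0 then x.2 * y.2 != 0 else Kr x y.

Lemma ltr_irr : irreflexive ltr.
Proof. move=> x; rewrite /ltr Kr_irr; by case: (x.1 == 0); rewrite ?andbF. Qed.

Lemma ltr_trans : transitive ltr.
Proof.
move=> y x z; rewrite /ltr.
case: (eqVneq x.1 0) => hx; case: (eqVneq y.1 0) => hy; case: (eqVneq z.1 0) => hz //=;
  rewrite ?andbF //.
- move=> /andP [hyx mxy] /andP [hzy myz]. rewrite (Kr_trans hzy hyx) /=.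
  case/andP: hzy => dzy _. exact: dvdr_mono dzy mxy.
- move=> mxy /andP [hzy myz]. case/andP: hzy => dzy _. exact: dvdr_mono dzy mxy.
- move=> hxy myz. case/andP: hxy => dxy _. rewrite mulrC. rewrite mulrC in myz.
  exact: dvdr_mono dxy myz.
- exact: Kr_trans.
Qed.

Lemma dom_mul (a b : R1) : (a * b != 0) = (a != 0) && (b != 0).
Proof.
case: hdom => _ hd.
apply/idP/idP.
- move=> h; apply/andP; split; apply/negP => /eqP e; move: h; by rewrite e ?mul0r ?mulr0 eqxx.
- case/andP => ha hb; apply/negP => /eqP /hd [] e; [by rewrite e eqxx in ha|by rewrite e eqxx in hb].
Qed.

Lemma back_dg : is_divisor_graph (zdg_vertices T) (@zdg_compl_adj T).
Proof.
apply: (@divisor_graph_of_order _ _ _ ltr).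
- exact: ltr_irr.
- exact: ltr_trans.
- move=> x y _ _ nxy. rewrite /zdg_compl_adj nxy /=.
  have -> : (x * y != 0) = (x.1 * y.1 != 0) || (x.2 * y.2 != 0).
    by case: x {nxy} => a b; case: y => c d; rewrite /= -negb_and.
  rewrite dom_mul /ltr.
  case: (eqVneq x.1 0) => hx; case: (eqVneq y.1 0) => hy //=; rewrite ?andbF /=.
  + rewrite [y.2 * _]mulrC -andb_orl. have hk := Kr_total x y nxy. rewrite orbC in hk. by rewrite hk.
  + by rewrite mulrC.
  + by rewrite orbF.
  + by rewrite (Kr_total x y nxy).
- apply/set0Pn; exists (0, 1); apply: (@inV _ _ (1, 0)).
  + by rewrite /= negb_and oner_neq0 orbT.
  + by rewrite /= negb_and oner_neq0.
  + by rewrite pmul mulr0 mul0r.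
Qed.
End Back.

Lemma pair_eq0 (R1 R2 : finComNzRingType) (a : R1) (b : R2) :
  (((a, b) : (R1 * R2)%type) == 0) = (a == 0) && (b == 0).
Proof. by []. Qed.

Lemma forward (R1 R2 : finComNzRingType) :
  is_local R2 -> is_PIR R2 ->
  diam_eq (zdg_vertices R1) (@zdg_adj R1) 0 ->
  diam_eq (zdg_vertices R2) (@zdg_adj R2) 2 ->
  is_divisor_graph (zdg_vertices (R1 * R2)%type) (@zdg_compl_adj (R1 * R2)%type) ->
  is_integral_domain R1.
Proof.
move=> hl2 hp2 [d1 _] [_ d2] [_ [f [finj [_ fadj]]]].
split; first exact: oner_neq0.
move=> a b hab.
case: (eqVneq a 0) => [->|ha]; first by left.
case: (eqVneq b 0) => [->|hb]; first by right.
exfalso.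
have aV : a \in zdg_vertices R1 by exact: (@inV _ _ _ ha hb hab).
have bV : b \in zdg_vertices R1 by apply: (@inV _ _ _ hb ha); rewrite mulrC.
have eab : a = b.
  case: (d1 a b aV bV) => p [_ _ hl hs].
  by move: hs hl; case: p.
have hz : a * a = 0 by rewrite {2}eab.
have z1 : a != 1.
  apply/negP => /eqP e; move: hz; rewrite e mul1r => /eqP; by rewrite oner_eq0.
case: (d2 isT) => x [y [hx hy hn]].
have xy : x * y != 0.
  apply/negP => /eqP h0; apply: hn.
  case: (eqVneq x y) => [<-|nxy].
    by exists [::]; split => //=; rewrite hx.
  exists [:: y]; split => //=; first by rewrite /zdg_adj nxy h0 eqxx.
  by rewrite hx hy.
have [t [tt tV]] : exists t, t * t != 0 /\ t \in zdg_vertices R2.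
  case/orP: (chain hl2 hp2 x y) => /existsP [r /eqP e].
  - exists x; split => //; apply/negP => /eqP h; move/negP: xy; apply.
    by rewrite e mulrCA h mulr0.
  - exists y; split => //; apply/negP => /eqP h; move/negP: xy; apply.
    by rewrite e -mulrA h mulr0.
move: (tV); rewrite /zdg_vertices in_setD1 => /andP [t0]; rewrite inE => /existsP [s /andP [s0 /eqP ts]].
have ss : s * s = 0.
  case/orP: (chain hl2 hp2 t s) => /existsP [r /eqP e].
  - by rewrite {1}e -mulrA ts mulr0.
  - exfalso; move/negP: tt; apply; by rewrite {2}e mulrCA ts mulr0.
have s1 : s != 1.
  apply/negP => /eqP e; move: ss; rewrite e mul1r => /eqP; by rewrite oner_eq0.
have st : s * t = 0 by rewrite mulrC.
pose P : (R1 * R2)%type := (0, 1).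
pose Q : (R1 * R2)%type := (0, s).
pose S : (R1 * R2)%type := (1, s).
pose T : (R1 * R2)%type := (a, 0).
pose U : (R1 * R2)%type := (a, t).
pose W : (R1 * R2)%type := (0, t).
pose X : (R1 * R2)%type := (1, 0).
have n10 : (1 : R1) != 0 := oner_neq0 _.
have n20 : (1 : R2) != 0 := oner_neq0 _.
have ne : forall (u v : (R1 * R2)%type), (u.1 != v.1) || (u.2 != v.2) -> u != v.
  by move=> [u1 u2] [v1 v2] /=; rewrite -negb_and xpair_eqE.
have nz : forall (u : (R1 * R2)%type), (u.1 != 0) || (u.2 != 0) -> u != 0.
  by move=> [u1 u2] /=; rewrite -negb_and xpair_eqE.
have e1a : ((1:R1) == 0) = false by apply/negbTE.
have e1b : ((0:R1) == 1) = false by rewrite eq_sym; apply/negbTE.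
have e1c : (a == 0) = false by apply/negbTE.
have e1d : (0 == a) = false by rewrite eq_sym; apply/negbTE.
have e1e : (a == 1) = false by apply/negbTE.
have e1f : (1 == a) = false by rewrite eq_sym; apply/negbTE.
have e2a : ((1:R2) == 0) = false by apply/negbTE.
have e2b : ((0:R2) == 1) = false by rewrite eq_sym; apply/negbTE.
have e2c : (s == 0) = false by apply/negbTE.
have e2d : (0 == s) = false by rewrite eq_sym; apply/negbTE.
have e2e : (t == 0) = false by apply/negbTE.
have e2f : (0 == t) = false by rewrite eq_sym; apply/negbTE.
have e2g : (s == 1) = false by apply/negbTE.
have e2h : (1 == s) = false by rewrite eq_sym; apply/negbTE.
have ett : (t * t == 0) = false by apply/negbTE.
have EF := (e1a, e1b, e1c, e1d, e1e, e1f, e2a, e2b, e2c, e2d, e2e, e2f, e2g, e2h, ett).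
have PV : P \in zdg_vertices _ by apply: (@inV _ _ X); rewrite /P /Q /S /T /U /W /X ?pmul ?pair_eq0 ?xpair_eqE ?mulr0 ?mul0r ?mulr1 ?mul1r ?ss ?hz ?ts ?st ?eqxx ?EF /=; rewrite ?EF ?eqxx //=.
have QV : Q \in zdg_vertices _ by apply: (@inV _ _ X); rewrite /P /Q /S /T /U /W /X ?pmul ?pair_eq0 ?xpair_eqE ?mulr0 ?mul0r ?mulr1 ?mul1r ?ss ?hz ?ts ?st ?eqxx ?EF /=; rewrite ?EF ?eqxx //=.
have SV : S \in zdg_vertices _ by apply: (@inV _ _ Q); rewrite /P /Q /S /T /U /W /X ?pmul ?pair_eq0 ?xpair_eqE ?mulr0 ?mul0r ?mulr1 ?mul1r ?ss ?hz ?ts ?st ?eqxx ?EF /=; rewrite ?EF ?eqxx //=.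
have TV : T \in zdg_vertices _ by apply: (@inV _ _ T); rewrite /P /Q /S /T /U /W /X ?pmul ?pair_eq0 ?xpair_eqE ?mulr0 ?mul0r ?mulr1 ?mul1r ?ss ?hz ?ts ?st ?eqxx ?EF /=; rewrite ?EF ?eqxx //=.
have UV : U \in zdg_vertices _ by apply: (@inV _ _ (a, s)); rewrite /P /Q /S /T /U /W /X ?pmul ?pair_eq0 ?xpair_eqE ?mulr0 ?mul0r ?mulr1 ?mul1r ?ss ?hz ?ts ?st ?eqxx ?EF /=; rewrite ?EF ?eqxx //=.
have WV : W \in zdg_vertices _ by apply: (@inV _ _ X); rewrite /P /Q /S /T /U /W /X ?pmul ?pair_eq0 ?xpair_eqE ?mulr0 ?mul0r ?mulr1 ?mul1r ?ss ?hz ?ts ?st ?eqxx ?EF /=; rewrite ?EF ?eqxx //=.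
have XV : X \in zdg_vertices _ by apply: (@inV _ _ P); rewrite /P /Q /S /T /U /W /X ?pmul ?pair_eq0 ?xpair_eqE ?mulr0 ?mul0r ?mulr1 ?mul1r ?ss ?hz ?ts ?st ?eqxx ?EF /=; rewrite ?EF ?eqxx //=.
have A : forall u v, u \in zdg_vertices _ -> v \in zdg_vertices _ -> u != v ->
   ((f u %| f v) || (f v %| f u))%N = (u * v != 0).
  by move=> u v hu hv nuv; rewrite -fadj // /zdg_compl_adj nuv.
have PQ : P = Q.
  apply: finj => //.
  apply: (@seven (f P) (f Q) (f S) (f T) (f U) (f W) (f X)).
  - by rewrite A //; rewrite /P /Q /S /T /U /W /X ?pmul ?pair_eq0 ?xpair_eqE ?mulr0 ?mul0r ?mulr1 ?mul1r ?ss ?hz ?ts ?st ?eqxx ?EF /=; rewrite ?EF ?eqxx //=.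
  - by rewrite A //; rewrite /P /Q /S /T /U /W /X ?pmul ?pair_eq0 ?xpair_eqE ?mulr0 ?mul0r ?mulr1 ?mul1r ?ss ?hz ?ts ?st ?eqxx ?EF /=; rewrite ?EF ?eqxx //=.
  - by rewrite A //; rewrite /P /Q /S /T /U /W /X ?pmul ?pair_eq0 ?xpair_eqE ?mulr0 ?mul0r ?mulr1 ?mul1r ?ss ?hz ?ts ?st ?eqxx ?EF /=; rewrite ?EF ?eqxx //=.
  - by rewrite A //; rewrite /P /Q /S /T /U /W /X ?pmul ?pair_eq0 ?xpair_eqE ?mulr0 ?mul0r ?mulr1 ?mul1r ?ss ?hz ?ts ?st ?eqxx ?EF /=; rewrite ?EF ?eqxx //=.
  - by rewrite A //; rewrite /P /Q /S /T /U /W /X ?pmul ?pair_eq0 ?xpair_eqE ?mulr0 ?mul0r ?mulr1 ?mul1r ?ss ?hz ?ts ?st ?eqxx ?EF /=; rewrite ?EF ?eqxx //=.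
  - by rewrite A //; rewrite /P /Q /S /T /U /W /X ?pmul ?pair_eq0 ?xpair_eqE ?mulr0 ?mul0r ?mulr1 ?mul1r ?ss ?hz ?ts ?st ?eqxx ?EF /=; rewrite ?EF ?eqxx //=.
  - by rewrite A //; rewrite /P /Q /S /T /U /W /X ?pmul ?pair_eq0 ?xpair_eqE ?mulr0 ?mul0r ?mulr1 ?mul1r ?ss ?hz ?ts ?st ?eqxx ?EF /=; rewrite ?EF ?eqxx //=.
  - by rewrite A //; rewrite /P /Q /S /T /U /W /X ?pmul ?pair_eq0 ?xpair_eqE ?mulr0 ?mul0r ?mulr1 ?mul1r ?ss ?hz ?ts ?st ?eqxx ?EF /=; rewrite ?EF ?eqxx //=.
  - by rewrite A //; rewrite /P /Q /S /T /U /W /X ?pmul ?pair_eq0 ?xpair_eqE ?mulr0 ?mul0r ?mulr1 ?mul1r ?ss ?hz ?ts ?st ?eqxx ?EF /=; rewrite ?EF ?eqxx //=.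
  - by rewrite A //; rewrite /P /Q /S /T /U /W /X ?pmul ?pair_eq0 ?xpair_eqE ?mulr0 ?mul0r ?mulr1 ?mul1r ?ss ?hz ?ts ?st ?eqxx ?EF /=; rewrite ?EF ?eqxx //=.
  - by rewrite A //; rewrite /P /Q /S /T /U /W /X ?pmul ?pair_eq0 ?xpair_eqE ?mulr0 ?mul0r ?mulr1 ?mul1r ?ss ?hz ?ts ?st ?eqxx ?EF /=; rewrite ?EF ?eqxx //=.
  - by rewrite A //; rewrite /P /Q /S /T /U /W /X ?pmul ?pair_eq0 ?xpair_eqE ?mulr0 ?mul0r ?mulr1 ?mul1r ?ss ?hz ?ts ?st ?eqxx ?EF /=; rewrite ?EF ?eqxx //=.
  - by rewrite A //; rewrite /P /Q /S /T /U /W /X ?pmul ?pair_eq0 ?xpair_eqE ?mulr0 ?mul0r ?mulr1 ?mul1r ?ss ?hz ?ts ?st ?eqxx ?EF /=; rewrite ?EF ?eqxx //=.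
  - by rewrite A //; rewrite /P /Q /S /T /U /W /X ?pmul ?pair_eq0 ?xpair_eqE ?mulr0 ?mul0r ?mulr1 ?mul1r ?ss ?hz ?ts ?st ?eqxx ?EF /=; rewrite ?EF ?eqxx //=.
case: PQ => e. by move/eqP: s1; rewrite e.
Qed.

Theorem theorem2p5 (R1 R2 : finComNzRingType) :
  is_local R1 -> is_PIR R1 -> is_local R2 -> is_PIR R2 ->
  diam_eq (zdg_vertices R1) (@zdg_adj R1) 0 ->
  diam_eq (zdg_vertices R2) (@zdg_adj R2) 2 ->
  (is_divisor_graph (zdg_vertices (R1 * R2)%type) (@zdg_compl_adj (R1 * R2)%type)
   <-> is_integral_domain R1).
Proof.
move=> _ _ hl2 hp2 d1 d2; split.
- exact: forward.
- move=> hd; exact: back_dg.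
Qed.
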